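(* Let $A=\{[x_i^a,y_i^a]\}_{i=1}^{n_a}$ and $B=\{[x_i^b,y_i^b]\}_{i=1}^{n_b}$ be persistence barcodes in $\mathcal{B}_F$ with $L_a,L_b>0$. If $r_\infty(A,B)\le 1/4$, then $$\|S(A)-S(B)\|_1\le -2L_{\min}\,r_\infty(A,B)\log\big(2r_\infty(A,B)\big)+2d_\infty(A,B)\log n_{\max}\le 2r_\infty(A,B)\left(-L_{\min}\log\big(2r_\infty(A,B)\big)+L_{\max}\frac{\log n_{\max}}{n_{\max}}\right).$$
   Context: A persistence barcode is a finite multiset of intervals $[x,y]$, $x\le y$; $\mathcal{B}_F$ is the set of barcodes all of whose intervals have finite endpoints. For $A$ write $\ell_i^a=y_i^a-x_i^a$, $L_a=\sum_i\ell_i^a$; similarly for $B$; $n_{\max}=\max\{n_a,n_b\}$, $L_{\max}=\max\{L_a,L_b\}$, $L_{\min}=\min\{L_a,L_b\}$. Bottleneck distance: pad the smaller barcode with zero-length intervals $[t,t]$ so both have $n_{\max}$ intervals, and $d_\infty(A,B)=\min_\gamma\max_i\max\{|x_i^a-x^b_{\gamma(i)}|,|y_i^a-y^b_{\gamma(i)}|\}$ over bijections $\gamma$ (and paddings). Relative error: $r_\infty(A,B)=2n_{\max}d_\infty(A,B)/L_{\max}$. The entropy summary function of $A$ is the step function $S(A):\mathbb{R}\to\mathbb{R}$, $S(A)[t]=-\sum_{i=1}^{n_a}w_i^a(t)\frac{\ell_i^a}{L_a}\log\frac{\ell_i^a}{L_a}$, where $w_i^a(t)=1$ if $x_i^a\le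 t\le y_i^a$ and $0$ otherwise (convention $0\log0=0$). $\|h\|_1=\int_{\mathbb{R}}|h(t)|\,dt$. *)

(* Defs.v *)
From HB Require Import structures.
From mathcomp Require Import all_boot all_order all_algebra all_fingroup.
From mathcomp Require Import all_classical all_reals all_analysis.
Set Implicit Arguments. Unset Strict Implicit. Unset Printing Implicit Defensive.
Import Order.TTheory GRing.Theory Num.Theory.
Local Open Scope ring_scope.

Section Barcodes.
Variable R : realType.

(* A barcode is a finite multiset of intervals [x,y], represented as a list
   of endpoint pairs (x,y); order of the list is irrelevant for all notions below. *)
Definition barcode := seq (R * R).

(* membership in B_F: all endpoints finite (automatic for reals) and x <= y *)
Definition valid_barcode (A : barcode) : bool := all (fun p => p.1 <= p.2) A.

Definition ilen (p : R * R) : R := p.2 - p.1.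

Definition total_len (A : barcode) : R := \sum_(p <- A) ilen p.

(* entropy summary function S(A)[t]; ln 0 = 0 in MathComp-Analysis, so 0 log 0 = 0 *)
Definition entropy_summary (A : barcode) (t : R) : R :=
  - \sum_(p <- A)
      (if (p.1 <= t) && (t <= p.2)
       then (ilen p / total_len A) * ln (ilen p / total_len A) else 0).

Definition nmax (A B : barcode) : nat := maxn (size A) (size B).

Definition pad (A : barcode) (ts : seq R) : barcode := A ++ [seq (t, t) | t <- ts].

Definition match_cost (n : nat) (PA PB : barcode) (g : 'S_n) : R :=
  \big[Num.max/0]_(i < n)
    Num.max `|(nth (0,0) PA i).1 - (nth (0,0) PB (g i)).1|
            `|(nth (0,0) PA i).2 - (nth (0,0) PB (g i)).2|.

(* bottleneck distance: min over paddings (only the smaller barcode gets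
   n_max - n padding intervals; for the larger one the padding is empty)
   and over bijections gamma *)
Definition bottleneck (A B : barcode) : R :=
  inf [set c : R | exists (tsA tsB : seq R) (g : 'S_(nmax A B)),
         [/\ size tsA = (nmax A B - size A)%N,
             size tsB = (nmax A B - size B)%N &
             c = @match_cost (nmax A B) (pad A tsA) (pad B tsB) g]].

Definition Lmax (A B : barcode) : R := Num.max (total_len A) (total_len B).
Definition Lmin (A B : barcode) : R := Num.min (total_len A) (total_len B).

Definition rel_error (A B : barcode) : R :=
  2 * (nmax A B)%:R * bottleneck A B / Lmax A B.

End Barcodes.

Definition L1_dist_entropy (R : realType) (A B : barcode R) : \bar R :=
  (\int[@lebesgue_measure R]_(t in [set: R])
     (`|entropy_summary A t - entropy_summary B t|)%:E)%E.

(* Main.v *)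
Require Import Defs.
From HB Require Import structures.
From mathcomp Require Import all_boot all_order all_algebra all_fingroup.
From mathcomp Require Import all_classical all_reals all_analysis.
From mathcomp Require Import ring lra zify measurable_realfun.
Set Implicit Arguments. Unset Strict Implicit. Unset Printing Implicit Defensive.
Import Order.TTheory GRing.Theory Num.Theory.
Local Open Scope ring_scope.

Section An.
Variable R : realType.
Implicit Types x y p q m : R.
Definition hh x : R := - (x * ln x).

Lemma ln_lex x : 0 < x -> ln x <= x - 1.
Proof. move=> x0; have := @le_ln1Dx R (x - 1). rewrite [1 + _]addrC subrK; apply; lra. Qed.

Lemma hh0 : hh 0 = 0. Proof. by rewrite /hh mul0r oppr0. Qed.

(* tangent *)
Lemma hh_tan x m : 0 <= x -> 0 < m -> hh x <= - x * ln m + m - x.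
Proof.
move=> x0 m0; rewrite /hh; have [->|xp] := eqVneq x 0; first by rewrite !mul0r oppr0; lra.
have xp' : 0 < x by rewrite lt_def xp x0.
have := @ln_lex (m / x) (divr_gt0 m0 xp'); rewrite ln_div ?posrE //.
move=> H; have := ler_wpM2l x0 H.
rewrite mulrBr mulrBr mulrA [x * m]mulrC -mulrA divff // mulr1 mulr1 => H2; lra.
Qed.

Lemma ln2_ge : 1/2 <= ln (2:R).
Proof.
have := @ln_lex (2^-1) ltac:(by []). rewrite lnV ?posrE // => H.
lra.
Qed.

Lemma ln_quarter_le x : 0 < x -> x <= 1/4 -> ln x <= -1.
Proof.
move=> x0 x4; have : ln x <= ln (1/4) by rewrite ler_ln ?posrE.
have -> : (1/4:R) = (2 * 2)^-1 by rewrite div1r -natrM.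
rewrite lnV ?posrE // lnM ?posrE //; have := ln2_ge; lra.
Qed.

Lemma hh_ge_id x : 0 <= x -> x <= 1/4 -> x <= hh x.
Proof.
move=> x0 x4; have [->|xp] := eqVneq x 0; first by rewrite hh0.
have xp' : 0 < x by rewrite lt_def xp x0.
have := @ln_quarter_le x xp' x4; rewrite /hh => H; nra.
Qed.

Lemma hh_mono x m : 0 <= x -> x <= m -> m <= 1/4 -> hh x <= hh m.
Proof.
move=> x0 xm m4; have [m0|mp] := eqVneq m 0.
  have x00 : x = 0 by apply/le_anti/andP; split => //; rewrite -m0.
  by rewrite x00 m0.
have mp' : 0 < m by rewrite lt_def mp (le_trans x0 xm).
have := @hh_tan x m x0 mp'; have := @ln_quarter_le m mp' m4; rewrite /hh => H1 H2; nra.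
Qed.

Lemma hh_double r : 0 <= r -> r <= 1/4 -> hh r <= hh (2 * r).
Proof.
move=> r0 r4; have [->|rp] := eqVneq r 0; first by rewrite mulr0.
have rp' : 0 < r by rewrite lt_def rp r0.
have H : ln (4 * r) <= 0 by apply: ln_le0; lra.
have H4 : ln (4 * r) = ln 2 + ln 2 + ln r.
  rewrite (_ : (4:R) = 2 * 2); last by rewrite -natrM.
  by rewrite lnM ?posrE ?mulr_gt0 // lnM ?posrE.
have H2 : ln (2 * r) = ln 2 + ln r by rewrite lnM ?posrE.
rewrite /hh H2; rewrite H4 in H.
have := mulr_ge0_le0 r0 H. nra.
Qed.

Lemma hh_subadd p d : 0 <= p -> 0 <= d -> hh (p + d) <= hh p + hh d.
Proof.
move=> p0 d0; have [->|pn] := eqVneq p 0; first by rewrite add0r hh0 add0r.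
have [->|dn] := eqVneq d 0; first by rewrite addr0 hh0 addr0.
have pp : 0 < p by rewrite lt_def pn p0.
have dp : 0 < d by rewrite lt_def dn d0.
have h1 : ln p <= ln (p + d) by rewrite ler_ln ?posrE //; lra.
have h2 : ln d <= ln (p + d) by rewrite ler_ln ?posrE //; lra.
rewrite /hh; nra.
Qed.

Lemma hh_diff p q : 0 <= p <= 1 -> 0 <= q <= 1 -> `|p - q| <= 1/4 ->
  hh q - hh p <= hh `|p - q|.
Proof.
move=> /andP[p0 p1] /andP[q0 q1] pq.
have [qp|pq'] := leP p q.
  have -> : `|p - q| = q - p by rewrite distrC ger0_norm // subr_ge0.
  have := @hh_subadd p (q - p) p0 ltac:(by rewrite subr_ge0).
  rewrite addrC subrK; lra.
have -> : `|p - q| = p - q by rewrite ger0_norm // subr_ge0 ltW.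
have pp : 0 < p by apply: le_lt_trans pq'.
have := @hh_tan q p q0 pp; have := @ln_le0 R p p1.
have := @hh_ge_id (p-q) ltac:(rewrite subr_ge0 ltW //) ltac:(move: pq; rewrite ger0_norm // subr_ge0 ltW //).
rewrite /hh => H1 H2 H3; nra.
Qed.

Lemma hh_ent_le q (n : nat) : 0 <= q -> (0 < n)%N -> hh q - q * ln n%:R <= n%:R^-1 - q.
Proof.
move=> q0 n0; have [->|qn] := eqVneq q 0.
  by rewrite hh0 !mul0r subr0 subr0 invr_ge0 ler0n.
have qp : 0 < q by rewrite lt_def qn q0.
have np : (0:R) < n%:R by rewrite ltr0n.
have := @hh_tan q (n%:R^-1) q0 ltac:(by rewrite invr_gt0); rewrite lnV ?posrE //; lra.
Qed.
End An.

Section Int.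
Variable R : realType.
Local Notation mu := (@lebesgue_measure R).
Definition ind (x y t : R) : R := if (x <= t) && (t <= y) then 1 else 0.

Lemma ind_indic x y : ind x y = \1_(`[x, y]%classic : set R).
Proof.
apply/funext => t; rewrite indicE /ind.
rewrite (_ : (t \in _) = (x <= t) && (t <= y)); first by case: (_ && _).
by rewrite mem_setE in_itv.
Qed.

Lemma meas_ind x y : measurable_fun setT (ind x y).
Proof. rewrite ind_indic; exact: measurable_realfun.measurable_indic. Qed.

Lemma int_ind c x y : 0 <= c -> x <= y ->
  (\int[mu]_(t in [set: R]) (c * ind x y t)%:E = (c * (y - x))%:E)%E.
Proof.
move=> c0 xy.
under eq_integral do rewrite EFinM.
rewrite ge0_integralZl //; last first.
- by move=> t _; rewrite lee_fin /ind; case: ifP.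
- by apply/measurable_realfun.measurable_EFinP; exact: meas_ind.
rewrite ind_indic integral_indic // setIT.
have H := @lebesgue_measure_itv R `[x, y]; rewrite /= in H.
have Hm : (lebesgue_measure ([set` `[x,y]] : set R) = (y - x)%:E)%E.
  rewrite H; case: ltP => // yx.
  have -> : y = x by apply/le_anti/andP; split.
  by rewrite subrr.
transitivity (c%:E * (y-x)%:E)%E; first by congr (_ * _)%E; exact: Hm.
by rewrite -EFinM.
Qed.
End Int.

Section Core1.
Variable R : realType.
Local Notation mu := (@lebesgue_measure R).
Implicit Types x y t P Q : R.

Lemma ind01 x y t : 0 <= ind x y t <= 1.
Proof. by rewrite /ind; case: ifP => _; rewrite ?lexx ?ler01. Qed.

Lemma ind_cover x1 y1 x2 y2 t : ind x1 y1 t = 1 -> ind x2 y2 t = 0 ->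
  1 <= ind (Num.min x1 x2) (Num.max x1 x2) t + ind (Num.min y1 y2) (Num.max y1 y2) t.
Proof.
rewrite /ind; case: ifP => [/andP[h1 h2] _|_ ]; last by move=> /eqP; rewrite eq_sym oner_eq0.
case: ifP => [_ /eqP|/negbT]; first by rewrite oner_eq0.
rewrite negb_and -!ltNge => /orP[tx|yt] _.
- have -> : (Num.min x1 x2 <= t) = true by rewrite ge_min h1.
  have -> : (t <= Num.max x1 x2) = true by rewrite le_max (ltW tx) orbT.
  by rewrite /=; case: ifP => _; lra.
- have -> : (Num.min y1 y2 <= t) = true by rewrite ge_min (ltW yt) orbT.
  have -> : (t <= Num.max y1 y2) = true by rewrite le_max h2.
  by rewrite /=; case: ifP => _; lra.
Qed.

Lemma pt_bound x1 y1 x2 y2 t P Q : 0 <= Q ->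
  `|P * ind x1 y1 t - Q * ind x2 y2 t| <=
   Q * ind (Num.min x1 x2) (Num.max x1 x2) t + Q * ind (Num.min y1 y2) (Num.max y1 y2) t
   + `|P - Q| * ind x1 y1 t.
Proof.
move=> Q0.
have i3 := ind01 (Num.min x1 x2) (Num.max x1 x2) t.
have i4 := ind01 (Num.min y1 y2) (Num.max y1 y2) t.
have w1 : ind x1 y1 t = 0 \/ ind x1 y1 t = 1 by rewrite /ind; case: ifP; [right|left].
have w2 : ind x2 y2 t = 0 \/ ind x2 y2 t = 1 by rewrite /ind; case: ifP; [right|left].
have nPQ := normr_ge0 (P - Q).
move: i3 i4 => /andP[i30 i31] /andP[i40 i41].
case: w1 => e1; case: w2 => e2; rewrite e1 e2 ?mulr0 ?mulr1 ?subr0 ?sub0r ?normrN.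
- rewrite normr0; nra.
- have := ind_cover e2 e1; rewrite (minC x2) (maxC x2) (minC y2) (maxC y2).
  rewrite ger0_norm //; nra.
- have := ind_cover e1 e2.
  have : `|P| <= Q + `|P - Q|.
    by have := ler_normD (P - Q) Q; rewrite subrK (ger0_norm Q0) => h; lra.
  nra.
- nra.
Qed.

Lemma meas_cind c x y : measurable_fun setT (fun t => c * ind x y t).
Proof. apply: measurable_realfun.measurable_funM => //; exact: meas_ind. Qed.

Lemma int_G c1 x1 y1 c2 x2 y2 c3 x3 y3 :
  0 <= c1 -> x1 <= y1 -> 0 <= c2 -> x2 <= y2 -> 0 <= c3 -> x3 <= y3 ->
  (\int[mu]_(t in [set: R]) (c1 * ind x1 y1 t + c2 * ind x2 y2 t + c3 * ind x3 y3 t)%:E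
   = (c1 * (y1 - x1) + c2 * (y2 - x2) + c3 * (y3 - x3))%:E)%E.
Proof.
move=> c10 xy1 c20 xy2 c30 xy3.
have nn c x y : 0 <= c -> forall t, 0 <= c * ind x y t.
  by move=> c0 t; apply: mulr_ge0 => //; case/andP: (ind01 x y t).
under eq_integral do rewrite EFinD.
rewrite ge0_integralD //; last 4 first.
- by move=> t _; rewrite lee_fin addr_ge0 // nn.
- apply/measurable_realfun.measurable_EFinP; apply: measurable_realfun.measurable_funD; exact: meas_cind.
- by move=> t _; rewrite lee_fin nn.
- apply/measurable_realfun.measurable_EFinP; exact: meas_cind.
under eq_integral do rewrite EFinD.
rewrite ge0_integralD //; last 4 first.
- by move=> t _; rewrite lee_fin nn.
- apply/measurable_realfun.measurable_EFinP; exact: meas_cind.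
- by move=> t _; rewrite lee_fin nn.
- apply/measurable_realfun.measurable_EFinP; exact: meas_cind.
by rewrite !int_ind.
Qed.
End Core1.

Section Core2.
Variable R : realType.
Local Notation mu := (@lebesgue_measure R).

Lemma maxmin (x y : R) : Num.max x y - Num.min x y = `|x - y|.
Proof.
rewrite maxEle minEle; case: leP => h.
  by rewrite distrC ger0_norm // subr_ge0.
by rewrite ger0_norm // subr_ge0 ltW.
Qed.

Lemma delta_bound (la lb La Lb S E e c nn : R) : 0 < La -> La <= Lb ->
  0 <= la <= La -> e = lb - la -> E = Lb - La -> `|E - e| <= S - `|e| ->
  S <= 2 * nn * c -> `|e| <= 2 * c -> 1 <= nn ->
  `|la / La - lb / Lb| <= 2 * nn * c / Lb.
Proof.
move=> La0 LaLb /andP[la0 laLa] ee EE hS S2 e2 nn1.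
have Lb0 : 0 < Lb by apply: lt_le_trans La0 LaLb.
set p := la / La.
have p0 : 0 <= p by rewrite divr_ge0 // ltW.
have p1 : p <= 1 by rewrite ler_pdivrMr // mul1r.
have pLa : p * La = la by rewrite /p divfK // gt_eqF.
clearbody p.
have key : p - lb / Lb = (p * E - e) / Lb.
  rewrite EE ee -pLa; field; by rewrite gt_eqF.
rewrite key normrM [`|Lb^-1|]ger0_norm ?invr_ge0 ?(ltW Lb0) // ler_pM2r ?invr_gt0 //.
have : `|p * E - e| <= p * `|E - e| + (1 - p) * `|e|.
  have -> : p * E - e = p * (E - e) - (1 - p) * e by ring.
  apply: (le_trans (ler_normB _ _)).
  rewrite !normrM (ger0_norm p0) [`|1 - p|]ger0_norm //; lra.
have ne := normr_ge0 e.
have nE := normr_ge0 (E - e).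
have c0 : 0 <= c by lra.
move=> h; apply: (le_trans h).
have h1 : p * `|E - e| <= p * (S - `|e|) by rewrite ler_wpM2l.
have [hp|hp] := leP (1/2) p.
  have : (1 - p) * `|e| <= p * `|e| by rewrite ler_wpM2r //; lra.
  have : p * S <= S by rewrite ler_piMl //; lra.
  lra.
have : (1 - 2 * p) * `|e| <= (1 - 2 * p) * (2 * c) by rewrite ler_wpM2l //; lra.
have : p * S <= p * (2 * nn * c) by rewrite ler_wpM2l.
have : c * (1 - 2 * p) <= c * (nn * (1 - p)) by rewrite ler_wpM2l //; nra.
nra.
Qed.
End Core2.

Section Core3.
Variable R : realType.
Local Notation mu := (@lebesgue_measure R).

Lemma hh_ge0 (q : R) : 0 <= q <= 1 -> 0 <= hh q.
Proof. move=> /andP[q0 q1]; rewrite /hh oppr_ge0; apply: mulr_ge0_le0 => //; exact: ln_le0. Qed.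

Definition Sf (n : nat) (a : 'I_n -> R * R) (L : R) (t : R) : R :=
  \sum_(i < n) hh (ilen (a i) / L) * ind (a i).1 (a i).2 t.

Lemma Sf_meas n (a : 'I_n -> R * R) L : measurable_fun setT (Sf a L).
Proof. apply: measurable_sum => i; exact: meas_cind. Qed.

Lemma core n (a b : 'I_n -> R * R) (c : R) :
  (forall i, (a i).1 <= (a i).2) -> (forall i, (b i).1 <= (b i).2) ->
  0 < \sum_(i < n) ilen (a i) ->
  \sum_(i < n) ilen (a i) <= \sum_(i < n) ilen (b i) ->
  (forall i, `|(a i).1 - (b i).1| <= c) -> (forall i, `|(a i).2 - (b i).2| <= c) ->
  2 * n%:R * c / \sum_(i < n) ilen (b i) <= 1/4 ->
  (\int[mu]_(t in [set: R])
     (`|Sf a (\sum_(i < n) ilen (a i)) t - Sf b (\sum_(i < n) ilen (b i)) t|)%:E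
   <= ((\sum_(i < n) ilen (a i)) * hh (2 * (2 * n%:R * c / \sum_(i < n) ilen (b i)))
        + 2 * c * ln n%:R)%:E)%E.
Proof.
set La := \sum_(i < n) ilen (a i); set Lb := \sum_(i < n) ilen (b i).
move=> va vb La0 LaLb cx cy.
set r := 2 * n%:R * c / Lb => r4.
have Lb0 : 0 < Lb by apply: lt_le_trans La0 LaLb.
have n0 : (0 < n)%N.
  rewrite lt0n; apply/eqP => n00; move: La0; rewrite /La big1 ?ltxx // => -[i hi] _.
  by exfalso; rewrite n00 in hi.
have c0 : 0 <= c by apply: le_trans (cx (Ordinal n0)).
have la0 i : 0 <= ilen (a i) by rewrite /ilen subr_ge0.
have lb0 i : 0 <= ilen (b i) by rewrite /ilen subr_ge0.
have laL i : ilen (a i) <= La.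
  by rewrite /La (bigD1 i) //= lerDl sumr_ge0.
have lbL i : ilen (b i) <= Lb.
  by rewrite /Lb (bigD1 i) //= lerDl sumr_ge0.
pose p i := ilen (a i) / La. pose q i := ilen (b i) / Lb.
have p01 i : 0 <= p i <= 1.
  by apply/andP; split; [apply: divr_ge0; [exact: la0|exact: ltW] | rewrite /p ler_pdivrMr // mul1r].
have q01 i : 0 <= q i <= 1.
  by apply/andP; split; [apply: divr_ge0; [exact: lb0|exact: ltW] | rewrite /q ler_pdivrMr // mul1r].
have r0 : 0 <= r by rewrite /r; apply: divr_ge0; [apply: mulr_ge0 =>//; apply: mulr_ge0 | exact: ltW].
pose e i := ilen (b i) - ilen (a i).
have e2 i : `|e i| <= 2 * c.
  have -> : e i = ((b i).2 - (a i).2) - ((b i).1 - (a i).1) by rewrite /e /ilen; ring.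
  apply: (le_trans (ler_normB _ _)); rewrite distrC [`|(b i).1 - _|]distrC.
  have := cx i; have := cy i; lra.
have dq i : `|p i - q i| <= r.
  apply: (@delta_bound _ _ _ _ _ (\sum_(j < n) `|e j|) (Lb - La) (e i)) => //.
  - by rewrite la0 laL.
  - have -> : Lb - La = \sum_(j < n) e j by rewrite /e sumrB.
    rewrite (bigD1 i) //= [X in _ <= X - _](bigD1 i) //= (addrC (e i)) addrK (addrC `|e i|) addrK.
    exact: ler_norm_sum.
  - apply: (le_trans (ler_sum _ (fun j _ => e2 j))).
    by rewrite sumr_const card_ord -mulr_natl; lra.
  - by rewrite ler1n.
pose G i t := hh (q i) * ind (Num.min (a i).1 (b i).1) (Num.max (a i).1 (b i).1) t
   + hh (q i) * ind (Num.min (a i).2 (b i).2) (Num.max (a i).2 (b i).2) t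
   + `|hh (p i) - hh (q i)| * ind (a i).1 (a i).2 t.
have Gmeas i : measurable_fun [set: R] (fun t : R => ((G i t)%:E : \bar R)).
  rewrite /G.
  apply/measurable_realfun.measurable_EFinP.
  apply: measurable_realfun.measurable_funD; last exact: meas_cind.
  apply: measurable_realfun.measurable_funD; exact: meas_cind.
have ind0 x y t : 0 <= ind x y t by case/andP: (ind01 x y t).
have G0 i t : 0 <= G i t.
  have hq := hh_ge0 (q01 i).
  by rewrite /G; apply: addr_ge0; [apply: addr_ge0|]; apply: mulr_ge0; rewrite ?hq ?normr_ge0 ?ind0.
apply: (@le_trans _ _ (\int[mu]_(t in [set: R]) (\sum_(i < n) G i t)%:E)%E).
  apply: (ge0_le_integral mu measurableT).
  - by move=> t _; rewrite lee_fin.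
  - apply/measurable_realfun.measurable_EFinP.
    have hB := measurable_funB (Sf_meas a La) (Sf_meas b Lb).
    by have := measurableT_comp (@normr_measurable R setT) hB.
  - apply/measurable_realfun.measurable_EFinP.
    apply: measurable_sum => i.
    by have /measurable_realfun.measurable_EFinP := Gmeas i.
  move=> t _; rewrite lee_fin /Sf -sumrB.
  apply: (le_trans (ler_norm_sum _ _ _)); apply: ler_sum => i _.
  exact: pt_bound (hh_ge0 (q01 i)).
under eq_integral do rewrite -sumEFin.
rewrite ge0_integral_sum //; last by move=> i t _; rewrite lee_fin.
under eq_bigr do rewrite int_G ?hh_ge0 ?ge_min ?le_max ?lexx ?orbT ?normr_ge0 //.
rewrite sumEFin lee_fin.
have hd i : `|hh (p i) - hh (q i)| <= hh r.
  have d4 : `|p i - q i| <= 1/4 := le_trans (dq i) r4.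
  have h1 := hh_diff (p01 i) (q01 i) d4.
  have h2 := hh_diff (q01 i) (p01 i) ltac:(by rewrite distrC).
  rewrite distrC in h2.
  have h3 := hh_mono (normr_ge0 _) (dq i) r4.
  rewrite ler_norml; apply/andP; split; lra.
have bi i : hh (q i) * (Num.max (a i).1 (b i).1 - Num.min (a i).1 (b i).1) +
      hh (q i) * (Num.max (a i).2 (b i).2 - Num.min (a i).2 (b i).2) +
      `|hh (p i) - hh (q i)| * ((a i).2 - (a i).1)
    <= hh (q i) * (2 * c) + hh r * ilen (a i).
  rewrite !maxmin.
  have hq := hh_ge0 (q01 i).
  have k1 : hh (q i) * `|(a i).1 - (b i).1| <= hh (q i) * c by rewrite ler_wpM2l.
  have k2 : hh (q i) * `|(a i).2 - (b i).2| <= hh (q i) * c by rewrite ler_wpM2l.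
  have k3 : `|hh (p i) - hh (q i)| * ilen (a i) <= hh r * ilen (a i) by rewrite ler_wpM2r.
  rewrite /ilen in k3 *; nra.
apply: (le_trans (ler_sum _ (fun i _ => bi i))).
rewrite big_split /= -mulr_suml -mulr_sumr -/La.
have sq : \sum_(i < n) q i = 1.
  by rewrite /q -mulr_suml -/Lb divff // gt_eqF.
have hent : \sum_(i < n) hh (q i) <= ln n%:R.
  have := ler_sum (index_enum 'I_n) (fun i (_ : true) => hh_ent_le (n := n) (proj1 (andP (q01 i))) n0).
  rewrite !sumrB sumr_const card_ord -mulr_suml sq mul1r.
  have -> : n%:R^-1 *+ n = 1 :> R by rewrite -(mulr_natl (n%:R^-1)) divff // pnatr_eq0 -lt0n.
  by rewrite subrr => h; lra.
have hr := hh_double r0 r4.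
have La0' := ltW La0.
have : 2 * c * \sum_(i < n) hh (q i) <= 2 * c * ln n%:R by rewrite ler_wpM2l // mulr_ge0.
have : hh r * La <= La * hh (2 * r) by rewrite mulrC ler_wpM2l.
lra.
Qed.
End Core3.

Section Attain.
Variable R : realType.
Variables A B : barcode R.
Hypotheses (vA : valid_barcode A) (vB : valid_barcode B).
Local Notation n := (nmax A B).

Definition mid (p : R * R) : R := (p.1 + p.2) / 2.
Definition gnat (g : 'S_n) (k : nat) : nat := oapp (fun i : 'I_n => nat_of_ord (g i)) 0%N (insub k).
Definition tsA (g : 'S_n) : seq R := mkseq (fun j => mid (nth (0,0) B (gnat g (size A + j)))) (n - size A).
Definition tsB (g : 'S_n) : seq R := mkseq (fun j => mid (nth (0,0) A (gnat g^-1 (size B + j)))) (n - size B).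

Lemma gnatE g (i : 'I_n) : gnat g i = g i.
Proof. by rewrite /gnat valK. Qed.

Lemma nth_pad (X : barcode R) ts k : (k < size X + size ts)%N ->
  nth (0,0) (pad X ts) k = if (k < size X)%N then nth (0,0) X k else (nth 0 ts (k - size X), nth 0 ts (k - size X)).
Proof.
move=> hk; rewrite /pad nth_cat; case: ifP => // /negbT; rewrite -leqNgt => h.
by rewrite (nth_map 0) // ltn_subLR.
Qed.

Lemma midpair (x y t : R) : x <= y ->
  Num.max `|mid (x, y) - x| `|mid (x, y) - y| <= Num.max `|t - x| `|t - y|.
Proof.
move=> xy; rewrite /mid /=.
have -> : `|(x + y) / 2 - x| = (y - x) / 2 by rewrite ger0_norm; [field|]; lra.
have -> : `|(x + y) / 2 - y| = (y - x) / 2 by rewrite ler0_norm; [field|]; lra.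
rewrite maxxx le_max; have [tx|tx] := leP x t.
  have [ty|ty] := leP t y.
    rewrite ger0_norm ?subr_ge0 // ler0_norm ?subr_le0 //.
    apply/orP; case: (leP ((y - x) / 2) (t - x)) => h; [left|right]; lra.
  by rewrite [`|t - x|]ger0_norm ?subr_ge0 //; apply/orP; left; lra.
apply/orP; right; rewrite ler0_norm; first lra.
rewrite subr_le0; apply: le_trans xy; exact: ltW.
Qed.

Lemma sizes_lt : (size A < n)%N -> (size B = n)%N.
Proof. rewrite /nmax => h; move: h; lia. Qed.
Lemma sizes_ltB : (size B < n)%N -> (size A = n)%N.
Proof. rewrite /nmax => h; apply/eqP; move: h; rewrite /nmax; lia. Qed.


Lemma midpairP (p : R * R) t : p.1 <= p.2 ->
  Num.max `|mid p - p.1| `|mid p - p.2| <= Num.max `|t - p.1| `|t - p.2|.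
Proof. by case: p => x y /=; exact: midpair. Qed.

Lemma validP (X : barcode R) k : valid_barcode X -> (k < size X)%N ->
  (nth (0,0) X k).1 <= (nth (0,0) X k).2.
Proof. by move=> /(all_nthP (0,0)) h /h. Qed.

Lemma cost_star g tsa tsb : size tsa = (n - size A)%N -> size tsb = (n - size B)%N ->
  match_cost (pad A (tsA g)) (pad B (tsB g)) g <= match_cost (pad A tsa) (pad B tsb) g.
Proof.
move=> sa sb; rewrite /match_cost; apply: le_bigmax2 => i _.
have hA : (size A <= n)%N by rewrite /nmax leq_maxl.
have hB : (size B <= n)%N by rewrite /nmax leq_maxr.
have sAs : size (tsA g) = (n - size A)%N by rewrite size_mkseq.
have sBs : size (tsB g) = (n - size B)%N by rewrite size_mkseq.
have lt1 (X : barcode R) ts (k : 'I_n) : size ts = (n - size X)%N -> (size X <= n)%N ->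
    (k < size X + size ts)%N.
  by move=> -> h; rewrite subnKC.
rewrite !nth_pad ?lt1 //.
case: (ltnP i (size A)) => hi; case: (ltnP (g i) (size B)) => hgi.
- by [].
-
  have eA : size A = n by apply: sizes_ltB; apply: leq_trans (ltn_ord (g i)).
  rewrite /tsB nth_mkseq; last by have := ltn_ord (g i); lia.
  rewrite subnKC // gnatE permK /=.
  rewrite ![`|(nth (0,0) A i).1 - _|]distrC ![`|(nth (0,0) A i).2 - _|]distrC.
  by apply: midpairP; apply: validP.
- have eB : size B = n by apply: sizes_lt; apply: leq_trans (ltn_ord i).
  rewrite /tsA nth_mkseq; last by have := ltn_ord i; lia.
  rewrite subnKC // gnatE /=.
  by apply: midpairP; apply: validP.
- have eB : size B = n by apply: sizes_lt; apply: leq_trans (ltn_ord i).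
  by move: hgi; rewrite eB leqNgt ltn_ord.
Qed.

Lemma attain : exists g0 : 'S_n,
  bottleneck A B = match_cost (pad A (tsA g0)) (pad B (tsB g0)) g0.
Proof.
pose K (g : 'S_n) := match_cost (pad A (tsA g)) (pad B (tsB g)) g.
case: (arg_minP K (i0 := 1%g) (P := predT) isT) => g0 _ Hmin.
exists g0; rewrite /bottleneck.
set C := (X in inf X).
have KC : C (K g0) by exists (tsA g0), (tsB g0), g0; split => //; rewrite size_mkseq.
have lb : lbound C (K g0).
  move=> c [tsa [tsb [g [sa sb ->]]]].
  apply: le_trans (Hmin g isT) _; exact: cost_star.
apply/le_anti/andP; split.
  by apply: (ge_inf (ex_intro _ (K g0) lb)).
by apply: lb_le_inf => //; exists (K g0).
Qed.
End Attain.

Section Final.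
Variable R : realType.
Local Notation mu := (@lebesgue_measure R).

Lemma core_sym n (a b : 'I_n -> R * R) (c : R) :
  (forall i, (a i).1 <= (a i).2) -> (forall i, (b i).1 <= (b i).2) ->
  0 < \sum_(i < n) ilen (a i) -> 0 < \sum_(i < n) ilen (b i) ->
  (forall i, `|(a i).1 - (b i).1| <= c) -> (forall i, `|(a i).2 - (b i).2| <= c) ->
  2 * n%:R * c / Num.max (\sum_(i < n) ilen (a i)) (\sum_(i < n) ilen (b i)) <= 1/4 ->
  (\int[mu]_(t in [set: R])
     (`|Sf a (\sum_(i < n) ilen (a i)) t - Sf b (\sum_(i < n) ilen (b i)) t|)%:E
   <= (Num.min (\sum_(i < n) ilen (a i)) (\sum_(i < n) ilen (b i))
        * hh (2 * (2 * n%:R * c / Num.max (\sum_(i < n) ilen (a i)) (\sum_(i < n) ilen (b i))))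
        + 2 * c * ln n%:R)%:E)%E.
Proof.
move=> va vb La0 Lb0 cx cy.
case: (leP (\sum_(i < n) ilen (a i)) (\sum_(i < n) ilen (b i))) => h.
  by move=> r4; exact: core.
move=> r4.
under eq_integral do rewrite distrC.
apply: (core vb va Lb0 (ltW h) _ _ r4) => i; rewrite distrC; [exact: cx | exact: cy].
Qed.

Lemma sum_pad (X : barcode R) ts (F : R * R -> R) : (forall t, F (t, t) = 0) ->
  \sum_(p <- pad X ts) F p = \sum_(p <- X) F p.
Proof.
move=> F0; rewrite /pad big_cat big_map.
have -> : \sum_(j <- ts) F (j, j) = 0 by rewrite big1.
exact: addr0.
Qed.

Lemma sum_nth_ord (P : barcode R) n (F : R * R -> R) : size P = n ->
  \sum_(p <- P) F p = \sum_(i < n) F (nth (0,0) P i).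
Proof. by move=> <-; rewrite (big_nth (0,0)) big_mkord. Qed.

Lemma sum_perm n (g : 'S_n) (F : 'I_n -> R) : \sum_(i < n) F (g i) = \sum_(i < n) F i.
Proof. by rewrite [RHS](reindex_inj (h := g) perm_inj). Qed.

Lemma es_sum (X : barcode R) t : entropy_summary X t =
  \sum_(p <- X) hh (ilen p / total_len X) * ind p.1 p.2 t.
Proof.
rewrite /entropy_summary -sumrN; apply: eq_bigr => p _.
by rewrite /ind /hh; case: ifP => _; rewrite ?mulr1 ?mulr0 ?oppr0.
Qed.

Lemma tl_pad (X : barcode R) ts : total_len (pad X ts) = total_len X.
Proof. by rewrite /total_len sum_pad // => t; rewrite /ilen subrr. Qed.

Lemma valid_pad (X : barcode R) ts : valid_barcode X -> valid_barcode (pad X ts).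
Proof.
move=> vX; rewrite /valid_barcode all_cat; apply/andP; split; first exact: vX.
by rewrite all_map; apply/allP => t _ /=.
Qed.

End Final.

Theorem theorem7 (R : realType) (A B : barcode R) :
  valid_barcode A -> valid_barcode B ->
  0 < total_len A -> 0 < total_len B ->
  rel_error A B <= 1 / 4 ->
  (L1_dist_entropy A B <=
     (- 2 * Lmin A B * rel_error A B * ln (2 * rel_error A B)
      + 2 * bottleneck A B * ln (nmax A B)%:R)%:E)%E /\
  - 2 * Lmin A B * rel_error A B * ln (2 * rel_error A B)
      + 2 * bottleneck A B * ln (nmax A B)%:R
  <= 2 * rel_error A B *
       (- Lmin A B * ln (2 * rel_error A B)
        + Lmax A B * (ln (nmax A B)%:R / (nmax A B)%:R)).
Proof.
move=> vA vB LA0 LB0 hr.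
have [g0 hd] := attain vA vB.
move: hd; set PA := pad A _; set PB := pad B _ => hd.
have sPA : size PA = nmax A B.
  by rewrite /PA /pad size_cat size_map size_mkseq subnKC // leq_maxl.
have sPB : size PB = nmax A B.
  by rewrite /PB /pad size_cat size_map size_mkseq subnKC // leq_maxr.
have d0 : 0 <= bottleneck A B by rewrite hd /match_cost; exact: bigmax_ge_id.
have nA : (0 < size A)%N.
  by move: LA0; case: A {vA hr PA sPA hd g0 PB sPB d0} => //; rewrite /total_len big_nil ltxx.
have n1 : (0 < nmax A B)%N by apply: leq_trans nA (leq_maxl _ _).
have LM0 : 0 < Lmax A B by rewrite /Lmax lt_max LA0.
split; last first.
  have E : 2 * rel_error A B * (Lmax A B * (ln (nmax A B)%:R / (nmax A B)%:R))
      = 4 * (bottleneck A B * ln (nmax A B)%:R).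
    rewrite /rel_error; field.
    by rewrite gt_eqF // ?ltr0n // gt_eqF.
  have : 0 <= bottleneck A B * ln (nmax A B)%:R.
    by apply: mulr_ge0 => //; apply: ln_ge0; rewrite ler1n.
  rewrite mulrDr E. 
  have -> : 2 * rel_error A B * (- Lmin A B * ln (2 * rel_error A B)) =
     - 2 * Lmin A B * rel_error A B * ln (2 * rel_error A B) by ring.
  lra.
pose a := fun i : 'I_(nmax A B) => nth (0,0) PA i.
pose b := fun i : 'I_(nmax A B) => nth (0,0) PB (g0 i).
have eSA t : entropy_summary A t = Sf a (total_len A) t.
  rewrite es_sum.
  have -> : \sum_(p <- A) hh (ilen p / total_len A) * ind p.1 p.2 t
      = \sum_(p <- PA) hh (ilen p / total_len A) * ind p.1 p.2 t.
    by rewrite /PA sum_pad // => s; rewrite /ilen subrr mul0r hh0 mul0r.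
  by rewrite (sum_nth_ord _ sPA).
have eSB t : entropy_summary B t = Sf b (total_len B) t.
  rewrite es_sum.
  have -> : \sum_(p <- B) hh (ilen p / total_len B) * ind p.1 p.2 t
      = \sum_(p <- PB) hh (ilen p / total_len B) * ind p.1 p.2 t.
    by rewrite /PB sum_pad // => s; rewrite /ilen subrr mul0r hh0 mul0r.
  rewrite (sum_nth_ord _ sPB) /Sf /b.
  by rewrite (sum_perm g0 (fun i => hh (ilen (nth (0,0) PB i) / total_len B) *
       ind (nth (0,0) PB i).1 (nth (0,0) PB i).2 t)).
have tA : \sum_(i < nmax A B) ilen (a i) = total_len A.
  by rewrite /a -(sum_nth_ord (@ilen R) sPA); exact: tl_pad.
have tB : \sum_(i < nmax A B) ilen (b i) = total_len B.
  rewrite /b (sum_perm g0 (fun i => @ilen R (nth (0,0) PB i))).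
  by rewrite -(sum_nth_ord (@ilen R) sPB); exact: tl_pad.
have va i : (a i).1 <= (a i).2.
  by apply: validP; [exact: valid_pad | rewrite sPA].
have vb i : (b i).1 <= (b i).2.
  by apply: validP; [exact: valid_pad | rewrite sPB].
have pc i : Num.max `|(a i).1 - (b i).1| `|(a i).2 - (b i).2| <= bottleneck A B.
  rewrite hd /match_cost.
  exact: (le_bigmax 0 (fun i : 'I_(nmax A B) => Num.max `|(nth (0,0) PA i).1 - (nth (0,0) PB (g0 i)).1|
            `|(nth (0,0) PA i).2 - (nth (0,0) PB (g0 i)).2|) i).
have cx i : `|(a i).1 - (b i).1| <= bottleneck A B.
  by apply: le_trans (pc i); rewrite le_max lexx.
have cy i : `|(a i).2 - (b i).2| <= bottleneck A B.
  by apply: le_trans (pc i); rewrite le_max lexx orbT.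
have r4 : 2 * (nmax A B)%:R * bottleneck A B /
    Num.max (\sum_(i < nmax A B) ilen (a i)) (\sum_(i < nmax A B) ilen (b i)) <= 1/4.
  by rewrite tA tB; exact: hr.
have main := core_sym va vb (ltac:(by rewrite tA)) (ltac:(by rewrite tB)) cx cy r4.
rewrite tA tB in main.
rewrite /L1_dist_entropy.
under eq_integral do rewrite eSA eSB.
apply: le_trans main _.
rewrite lee_fin le_eqVlt; apply/orP; left; apply/eqP.
rewrite /hh /Lmin /rel_error /Lmax; ring.
Qed.
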